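(* Let $G$ be a countable discrete amenable group and $(X,d)$ a compact metric space. Let $\sigma$ be the full $G$-shift on $X^G$, $\sigma^h((x_g)_{g\in G})=(x_{gh})_{g\in G}$, and equip $X^G$ with the metric $\boldsymbol d(x,y)=\sum_{g\in G}\alpha_g\,d(x_g,y_g)$, where $\alpha_g\in(0,\infty)$, $\alpha_{1_G}=1$ and $\sum_{g\in G}\alpha_g<\infty$. Assume the $G$-system $(X^G,\sigma)$ with metric $\boldsymbol d$ satisfies Condition (C). Then $$\overline{\mathrm{mdim}}_{\mathrm M}(X^G,G,\boldsymbol d)=\overline{\dim}_{\mathrm B}(X,d),\qquad\underline{\mathrm{mdim}}_{\mathrm M}(X^G,G,\boldsymbol d)=\underline{\dim}_{\mathrm B}(X,d).$$
   Context: Upper/lower Minkowski (box) dimension: $\overline{\dim}_{\mathrm B}(X,d)=\limsup_{\varepsilon\to0}\frac{\log N(\varepsilon)}{|\log\varepsilon|}$, $\underline{\dim}_{\mathrm B}(X,d)=\liminf_{\varepsilon\to0}\frac{\log N(\varepsilon)}{|\log\varepsilon|}$, where $N(\varepsilon)$ is the maximal cardinality of a subset of $X$ whose distinct points are at $d$-distance $>\varepsilon$. Metric mean dimension of a $G$-system $(Z,G)$ with metric $\rho$: with a Følner sequence $(F_n)$, $\rho_F(x,y)=\max_{g\in F}\rho(gx,gy)$ and $s_F(\rho,\varepsilon,Z)$ the maximal cardinality of a subset of $Z$ whose distinct points have $\rho_F$-distance $>\varepsilon$, $\overline{\mathrm{mdim}}_{\mathrm M}(Z,G,\rho)=\limsup_{\varepsilon\to0}\frac{1}{|\log\varepsilon|}\limsup_n\frac1{|F_n|}\log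 s_{F_n}(\rho,\varepsilon,Z)$ and $\underline{\mathrm{mdim}}_{\mathrm M}$ with $\liminf_{\varepsilon\to0}$ (independent of the Følner sequence). Condition (C) for a $G$-system $(Z,G)$ with metric $\rho$: let $E(Z,G)$ be the set of ergodic $G$-invariant Borel probability measures; for a finite measurable partition $\mathcal P$ let $\partial\mathcal P=\bigcup_{A\in\mathcal P}\partial A$, $\mathrm{diam}(\mathcal P)=\max_{A\in\mathcal P}\mathrm{diam}(A)$, $U_r(A)=\{x\in A:\exists y\in Z\setminus A,\ \rho(x,y)<r\}$, $U_r(\mathcal P)=\bigcup_{A\in\mathcal P}U_r(A)$; for $\mu\in E(Z,G)$ and $\gamma>0$ let $r_{\mu,\gamma}=\sup\{r>0:\exists$ finite measurable partition $\mathcal P$ with $\mu(\partial\mathcal P)=0$, $\mathrm{diam}(\mathcal P)<\gamma$, $\mu(U_r(\mathcal P))<\gamma\}$ and $r_\gamma=\inf_{\mu\in E(Z,G)}r_{\mu,\gamma}$. Condition (C) requires $r_\gamma>0$ for every $\gamma>0$ and $\lim_{\gamma\to0}\frac{\log r_\gamma}{\log\gamma}=1$. *)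

(* Defs.v *)
From HB Require Import structures.
From mathcomp Require Import all_boot all_order all_algebra.
From mathcomp Require Import all_classical all_reals all_analysis.
Set Implicit Arguments. Unset Strict Implicit. Unset Printing Implicit Defensive.
Import Order.TTheory GRing.Theory Num.Theory.
Import numFieldNormedType.Exports.
Local Open Scope classical_set_scope.
Local Open Scope ring_scope.

Section MetricNotions.
Context {R : realType} {Z : Type} (rho : Z -> Z -> R).

Definition is_metric : Prop :=
  (forall x y, 0 <= rho x y) /\ (forall x y, rho x y = 0 <-> x = y) /\
  (forall x y, rho x y = rho y x) /\
  (forall x y z, rho x z <= rho x y + rho y z).

Definition dball (x : Z) (r : R) : set Z := [set y | rho x y < r].

Definition dopen : set (set Z) :=
  [set A | forall x, A x -> exists2 r, 0 < r & dball x r `<=` A].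

Definition dcompact : Prop :=
  forall (I : Type) (U : I -> set Z), (forall i, dopen (U i)) ->
    \bigcup_i U i = setT ->
    exists n (f : 'I_n -> I), \bigcup_k U (f k) = setT.

Definition dclosure (A : set Z) : set Z :=
  [set x | forall r, 0 < r -> exists2 y, A y & rho x y < r].
Definition dinterior (A : set Z) : set Z :=
  [set x | exists2 r, 0 < r & dball x r `<=` A].
Definition dboundary (A : set Z) : set Z := dclosure A `\` dinterior A.

Definition ddiam (A : set Z) : \bar R :=
  ereal_sup [set (rho xy.1 xy.2)%:E | xy in A `*` A].

Definition Ur (r : R) (A : set Z) : set Z :=
  [set x | A x /\ exists2 y, ~ A y & rho x y < r].

Definition sepnum (eps : R) : \bar R :=
  ereal_sup [set (n%:R)%:E | n in
    [set n : nat | exists f : 'I_n -> Z, forall i j, i != j -> eps < rho (f i) (f j)]].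
End MetricNotions.

Definition elog {R : realType} (x : \bar R) : \bar R :=
  match x with
  | r%:E => (ln r)%:E
  | +oo%E => +oo%E
  | -oo%E => -oo%E
  end.

Section BoxDim.
Context {R : realType} {Z : Type} (rho : Z -> Z -> R).
Local Open Scope ereal_scope.
Definition box_ratio (eps : R) : \bar R :=
  ((`|ln eps|)^-1)%:E * elog (sepnum rho eps).
Definition upper_box_dim : \bar R := limf_esup box_ratio (0:R)^'+.
Definition lower_box_dim : \bar R := limf_einf box_ratio (0:R)^'+.
End BoxDim.

Section Folner.
Context {R : realType} {G : countType} (mul : G -> G -> G).

(* |g F \triangle F| for a finite set F given as a duplicate-free list *)
Definition symdiff_card (g : G) (s : seq G) : nat :=
  count (fun x => x \notin s) (map (mul g) s) +
  count (fun x => x \notin map (mul g) s) s.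

Definition folner (F : nat -> seq G) : Prop :=
  (forall n, uniq (F n) /\ F n != [::]) /\
  forall g, (fun n => ((symdiff_card g (F n))%:R / (size (F n))%:R : R)) @ \oo
              --> (0 : R).

(* a countable discrete group is amenable iff it admits a Følner sequence *)
Definition amenable : Prop := exists F, folner F.
End Folner.

Section MeanDim.
Context {R : realType} {G : countType} {Z : Type}
  (act : G -> Z -> Z) (rho : Z -> Z -> R).
Local Open Scope ereal_scope.

Definition rhoF (s : seq G) (x y : Z) : R :=
  (\big[Num.max/0]_(g <- s) rho (act g x) (act g y))%R.

Definition mdim_ratio (F : nat -> seq G) (eps : R) : \bar R :=
  ((`|ln eps|)^-1)%:E *
  limn_esup (fun n => (((size (F n))%:R)^-1)%:E * elog (sepnum (rhoF (F n)) eps)).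

Definition upper_mdimM (F : nat -> seq G) : \bar R :=
  limf_esup (mdim_ratio F) (0:R)^'+.
Definition lower_mdimM (F : nat -> seq G) : \bar R :=
  limf_einf (mdim_ratio F) (0:R)^'+.
End MeanDim.

Section ConditionC.
Context {R : realType} {G : Type} {Z : pointedType}
  (act : G -> Z -> Z) (rho : Z -> Z -> R).
Local Open Scope ereal_scope.

Definition BorelZ := g_sigma_algebraType (dopen rho).

Definition invariant_measure (mu : probability BorelZ R) : Prop :=
  forall (h : G) (A : set BorelZ), measurable A -> mu (act h @^-1` A) = mu A.

Definition ergodic_measure (mu : probability BorelZ R) : Prop :=
  invariant_measure mu /\
  forall A : set BorelZ, measurable A -> (forall h, act h @^-1` A = A) ->
    mu A = 0 \/ mu A = 1.

Definition meas_partition n (P : 'I_n -> set BorelZ) : Prop :=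
  (forall i, measurable (P i)) /\
  (forall i j, i != j -> P i `&` P j = set0) /\
  \bigcup_i P i = setT.

Definition r_mu (mu : probability BorelZ R) (gamma : R) : \bar R :=
  ereal_sup [set r%:E | r in [set r : R | (0 < r)%R /\
    exists n (P : 'I_n -> set BorelZ), meas_partition P /\
      mu (\bigcup_i dboundary rho (P i)) = 0 /\
      (forall i, ddiam rho (P i) < gamma%:E) /\
      mu (\bigcup_i Ur rho r (P i)) < gamma%:E]].

Definition r_gamma (gamma : R) : \bar R :=
  ereal_inf [set r_mu mu gamma | mu in [set mu | ergodic_measure mu]].

Definition condition_C : Prop :=
  (forall gamma : R, (0 < gamma)%R -> 0 < r_gamma gamma) /\
  (forall e : R, (0 < e)%R -> exists2 delta : R, (0 < delta)%R &
     forall gamma : R, (0 < gamma < delta)%R ->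
       exists r : R, r_gamma gamma = r%:E /\ (`| ln r / ln gamma - 1 | < e)%R).
End ConditionC.

Definition gshift {G X : Type} (mul : G -> G -> G) (h : G) (x : G -> X) : G -> X :=
  fun g => x (mul g h).

Definition prod_metric {R : realType} {G : choiceType} {X : Type} (alpha : G -> R)
  (d : X -> X -> R) (x y : G -> X) : R :=
  fine (\esum_(g in [set: G]) (alpha g * d (x g) (y g))%:E).

(* Main.v *)
Require Import Defs.
From HB Require Import structures.
From mathcomp Require Import all_boot all_order all_algebra.
From mathcomp Require Import all_classical all_reals all_analysis.
From mathcomp Require Import ring lra.
Import Order.TTheory GRing.Theory Num.Theory.
Import numFieldNormedType.Exports.
Local Open Scope classical_set_scope.
Local Open Scope ring_scope.
Section Key.
Variable R : realType.

Lemma right0P (P : set R) :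
  (0:R)^'+ P <-> exists2 d : R, 0 < d & forall y, 0 < y < d -> P y.
Proof.
split.
- move=> /nbhs_ballP [e /= e0 He]; exists e => // y /andP[y0 ye]; apply: He => //.
  by rewrite /ball /= sub0r normrN gtr0_norm.
- move=> [e e0 He]; apply/nbhs_ballP; exists e => //= y; rewrite /ball /= sub0r normrN => ye y0.
  apply: He; rewrite y0 /=; by rewrite gtr0_norm in ye.
Qed.

Lemma ratio_small (c e : R) : 0 < c < 1 -> 0 < e ->
  exists2 d : R, 0 < d & forall x, 0 < x < d ->
    x < 1 /\ `|ln x|^-1 <= (1+e) * `|ln (c*x)|^-1.
Proof.
move=> /andP[c0 c1] e0.
exists (Num.min 1 (expR (ln c / e))).
  by rewrite lt_min ltr01 expR_gt0.
move=> x /andP[x0]; rewrite lt_min => /andP[x1 xE].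
split => //.
have lnx : ln x < 0 by apply: ln_lt0; rewrite x0 x1.
have lnc : ln c < 0 by apply: ln_lt0; rewrite c0 c1.
have hx : ln x < ln c / e.
  by rewrite -(expRK (ln c / e)) ltr_ln // posrE expR_gt0.
have hx' : e * ln x <= ln c.
  by rewrite mulrC; apply: ltW; rewrite -ltr_pdivlMr.
rewrite lnM ?posrE // (ltr0_norm lnx) ltr0_norm; last by lra.
rewrite -[X in _ <= X](invf_div (- (ln c + ln x)) (1+e)).
rewrite lef_pV2 ?posrE; last 2 first.
- by rewrite oppr_gt0.
- by rewrite divr_gt0 //; lra.
rewrite ler_pdivrMr; last by lra.
nra.
Qed.

Lemma close1 (X : \bar R) (t : R) :
  (forall e : R, 0 < e -> e < 1 -> (X <= ((1+e)*(1+e)*t)%:E)%E) -> (X <= t%:E)%E.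
Proof.
move=> H; case: X H => [x| |] H.
- rewrite lee_fin; have [t0|t0] := lerP t 0.
    have := H (1/2); rewrite lee_fin => /(_ ltac:(lra) ltac:(lra)) h; nra.
  rewrite leNgt; apply/negP => tx.
  pose e := Num.min (1/2) ((x - t) / (4 * t)).
  have e0 : 0 < e by rewrite lt_min; apply/andP; split; [lra|apply: divr_gt0; lra].
  have e1 : e <= 1/2 by rewrite ge_min lexx.
  have e2 : e <= (x - t) / (4 * t) by rewrite ge_min lexx orbT.
  have e3 : e * (4 * t) <= x - t by rewrite -ler_pdivlMr //; lra.
  have := H e e0 ltac:(lra); rewrite lee_fin => h; nra.
- by have := H (1/2) ltac:(lra) ltac:(lra); rewrite leNgt ltey.
- by rewrite leNye.
Qed.

Lemma close2 (X L : \bar R) :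
  (forall t : R, (L < t%:E)%E -> (X <= t%:E)%E) -> (X <= L)%E.
Proof.
case: L => [l| |] H.
- apply/lee_addgt0Pr => e e0; rewrite -EFinD; apply: H.
  by rewrite lte_fin; lra.
- by rewrite leey.
- case: X H => [x| |] H //.
  + by have := H (x - 1) (ltNyr _); rewrite lee_fin => h; exfalso; lra.
  + by have := H 0 (ltNyr _); rewrite leNgt ltey.
Qed.

Section KeyHyp.
Variables (m b : R -> \bar R) (a : R -> R) (c : R).
Hypothesis c01 : 0 < c < 1.
Hypothesis a0 : forall {x : R}, 0 < x -> 0 <= a x.
Hypothesis bE : forall {x : R}, 0 < x -> b x = (`|ln x|^-1 * a x)%:E.
Hypothesis bm : forall {x : R}, 0 < x < 1 -> (b x <= m x)%E.
Hypothesis mb : forall {e : R}, 0 < e -> forall {x : R}, 0 < x < 1 ->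
   (m x <= ((1+e) * (`|ln x|^-1 * a (c*x)))%:E)%E.

Let step (e : R) (t : R) (x : R) : 0 < e -> 0 < x < 1 ->
  `|ln x|^-1 <= (1+e) * `|ln (c*x)|^-1 ->
  `|ln (c*x)|^-1 * a (c*x) < t ->
  (m x <= ((1+e)*(1+e)*t)%:E)%E.
Proof.
move=> e0 x01 hr ht; have H1 := mb e0 x01; apply: (le_trans H1); rewrite lee_fin.
have cx0 : 0 < c * x by case/andP: c01 => c0 _; case/andP: x01 => x0 _; exact: mulr_gt0.
have A0 := a0 cx0.
have h1 : `|ln x|^-1 * a (c*x) <= (1+e) * `|ln (c*x)|^-1 * a (c*x).
  by apply: ler_wpM2r.
have h2 : (1+e) * `|ln (c*x)|^-1 * a (c*x) <= (1+e) * t.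
  by rewrite -mulrA; apply: ler_wpM2l; [lra|apply: ltW].
rewrite -mulrA; apply: ler_wpM2l; first lra.
by apply: le_trans h1 h2.
Qed.

Lemma key_sup_le : (limf_esup m (0:R)^'+ <= limf_esup b (0:R)^'+)%E.
Proof.
apply: close2 => t /ereal_inf_lt [_ [V FV <-]] Vt.
apply: close1 => e e0 e1.
have [d1 d10 Hd1] := (right0P V).1 FV.
have [d2 d20 Hd2] := @ratio_small c e c01 e0.
have [c0 c1] : 0 < c /\ c < 1 by case/andP: c01.
pose W := [set x : R | 0 < x < Num.min d1 d2].
have FW : (0:R)^'+ W.
  by apply/right0P; exists (Num.min d1 d2) => //; rewrite lt_min d10.
apply: le_trans (ereal_inf_lbound _) _; first by exists W.
apply: ge_ereal_sup => _ [x Wx <-]; move: Wx => /andP[x0]; rewrite lt_min => /andP[xd1 xd2].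
have [x1 hr] := Hd2 x ltac:(by rewrite x0).
have cx0 : 0 < c * x by exact: mulr_gt0.
have cxV : V (c * x).
  by apply: Hd1; rewrite cx0 /=; apply: le_lt_trans xd1; rewrite ler_piMl // ltW.
apply: (@step e t x e0 _ hr) => //; first by rewrite x0.
rewrite -lte_fin -bE //; apply: le_lt_trans Vt.
by apply: ereal_sup_ubound; exists (c * x).
Qed.


Lemma key_sup_ge : (limf_esup b (0:R)^'+ <= limf_esup m (0:R)^'+)%E.
Proof.
apply: le_ereal_inf_tmp => _ [V FV <-].
have [d d0 Hd] := (right0P V).1 FV.
pose V' := [set x : R | 0 < x < Num.min d 1].
have FV' : (0:R)^'+ V'.
  by apply/right0P; exists (Num.min d 1) => //; rewrite lt_min d0 ltr01.
apply: le_trans (ereal_inf_lbound _) _; first by exists V'.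
apply: ge_ereal_sup => _ [x Vx <-]; move: Vx => /andP[x0]; rewrite lt_min => /andP[xd x1].
apply: le_trans (bm _) _; first by rewrite x0.
by apply: ereal_sup_ubound; exists x => //; apply: Hd; rewrite x0.
Qed.

Lemma key_inf_ge : (limf_einf b (0:R)^'+ <= limf_einf m (0:R)^'+)%E.
Proof.
rewrite !limf_einfE; apply: ge_ereal_sup => _ [V FV <-].
have [d d0 Hd] := (right0P V).1 FV.
pose V' := [set x : R | 0 < x < Num.min d 1].
have FV' : (0:R)^'+ V'.
  by apply/right0P; exists (Num.min d 1) => //; rewrite lt_min d0 ltr01.
apply: le_trans (ereal_sup_ubound _) ; last by exists V'.
apply: le_ereal_inf_tmp => _ [x Vx <-]; move: Vx => /andP[x0]; rewrite lt_min => /andP[xd x1].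
apply: le_trans (bm _); last by rewrite x0.
by apply: ereal_inf_lbound; exists x => //; apply: Hd; rewrite x0.
Qed.

Lemma key_inf_le : (limf_einf m (0:R)^'+ <= limf_einf b (0:R)^'+)%E.
Proof.
apply: close2 => t Lt; apply: close1 => e e0 e1.
have [c0 c1] : 0 < c /\ c < 1 by case/andP: c01.
rewrite limf_einfE; apply: ge_ereal_sup => _ [W FW <-].
have [d1 d10 Hd1] := (right0P W).1 FW.
have [d2 d20 Hd2] := @ratio_small c e c01 e0.
pose V := [set x : R | 0 < x < c * Num.min d1 d2].
have FV : (0:R)^'+ V.
  by apply/right0P; exists (c * Num.min d1 d2) => //; rewrite mulr_gt0 // lt_min d10.
have : (ereal_inf (b @` V) < t%:E)%E.
  apply: le_lt_trans Lt; rewrite limf_einfE; apply: ereal_sup_ubound; by exists V.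
move=> /ereal_inf_lt [_ [y Vy <-]] byt.
move: Vy => /andP[y0 yd].
pose x := y / c.
have x0 : 0 < x by rewrite divr_gt0.
have cxy : c * x = y by rewrite /x mulrC divfK // gt_eqF.
have xd : x < Num.min d1 d2 by rewrite /x ltr_pdivrMr // mulrC.
move: xd; rewrite lt_min => /andP[xd1 xd2].
have [x1 hr] := Hd2 x ltac:(by rewrite x0).
apply: le_trans (ereal_inf_lbound _) _; first by exists x => //; apply: Hd1; rewrite x0.
apply: (@step e t x e0 _ hr); first by rewrite x0.
by rewrite cxy -lte_fin -bE.
Qed.

End KeyHyp.
End Key.
Definition sepset {R : realType} {Z : Type} (rho : Z -> Z -> R) (eps : R) : set nat :=
  [set n : nat | exists f : 'I_n -> Z, forall i j, i != j -> eps < rho (f i) (f j)].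

Section SepGen.
Variables (R : realType) (Z : Type) (rho : Z -> Z -> R).

Lemma sepnum_le {eps : R} {B : nat} : (forall n, sepset rho eps n -> (n <= B)%N) ->
  (sepnum rho eps <= (B%:R)%:E)%E.
Proof.
move=> HB; apply: ge_ereal_sup => _ [n Hn <-]; rewrite lee_fin ler_nat; exact: HB.
Qed.

Lemma sepnum_ge {eps : R} {n : nat} : sepset rho eps n -> ((n%:R)%:E <= sepnum rho eps)%E.
Proof. by move=> Hn; apply: ereal_sup_ubound; exists n. Qed.

Lemma sepnum_real (eps : R) (n0 B : nat) : sepset rho eps n0 -> (0 < n0)%N ->
  (forall n, sepset rho eps n -> (n <= B)%N) ->
  exists s : R, [/\ sepnum rho eps = s%:E, n0%:R <= s & s <= B%:R].
Proof.
move=> H0 n0p HB.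
have h1 := sepnum_ge H0; have h2 := sepnum_le HB.
move: h1 h2; case: (sepnum rho eps) => [s| |] //= h1 h2.
by exists s; split => //; rewrite -lee_fin.
Qed.

Lemma sep1 (eps : R) (z : Z) : sepset rho eps 1.
Proof. by exists (fun _ => z) => i j; rewrite !ord1. Qed.

Lemma sep_fintype (T : finType) {eps : R} (phi : T -> Z) :
  (forall a b, a != b -> eps < rho (phi a) (phi b)) -> sepset rho eps #|T|.
Proof.
move=> H; exists (fun i => phi (enum_val i)) => i j ij; apply: H.
by apply: contra ij => /eqP /enum_val_inj ->.
Qed.

Lemma sep_le_fintype (T : finType) {eps : R} (code : Z -> T) :
  (forall p q, code p = code q -> rho p q <= eps) ->
  forall n, sepset rho eps n -> (n <= #|T|)%N.
Proof.
move=> H n [f Hf].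
have inj : injective (fun i => code (f i)).
  move=> i j /H hij; apply/eqP; apply: contraTT hij => ij.
  by rewrite -ltNge; apply: Hf.
by have := leq_card _ inj; rewrite card_ord.
Qed.
End SepGen.

Section Metric.
Variables (R : realType) (X : Type) (d : X -> X -> R).
Hypothesis dm : is_metric d.
Hypothesis dc : dcompact d.

Lemma d_ge0 x y : 0 <= d x y. Proof. by case: dm. Qed.
Lemma d_refl x : d x x = 0. Proof. by case: dm => _ [H _]; apply/H. Qed.
Lemma d_sym x y : d x y = d y x. Proof. by case: dm => _ [_ [H _]]. Qed.
Lemma d_tri x y z : d x z <= d x y + d y z. Proof. by case: dm => _ [_ [_ H]]. Qed.

Lemma dopen_ball x r : dopen d (dball d x r).
Proof.
move=> y /= hy; exists (r - d x y); first by rewrite subr_gt0.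
move=> z /= hz; apply: le_lt_trans (d_tri x y z) _; rewrite /dball /= in hz; lra.
Qed.

Lemma finite_cover {eta : R} : 0 < eta ->
  exists k (c : 'I_k -> X), forall x, exists j, d (c j) x < eta.
Proof.
move=> e0.
have := @dc X (fun x => dball d x eta) (fun x => dopen_ball x eta).
case.
  apply/seteqP; split => // y _; exists y => //; by rewrite /dball /= d_refl.
move=> k [f Hf]; exists k, f => x.
have : (\bigcup_j dball d (f j) eta) x by rewrite Hf.
by case=> j _ hj; exists j.
Qed.

Lemma sep_bounded {eta : R} : 0 < eta ->
  exists B : nat, forall n, sepset d eta n -> (n <= B)%N.
Proof.
move=> e0; have [k [c Hc]] := @finite_cover (eta / 2) ltac:(lra).
exists k => n [f Hf].
have [g Hg] := boolp.choice (fun i => Hc (f i)).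
have inj : injective g.
  move=> i j gij; apply/eqP; apply: contraT => ij.
  have := Hf i j ij; have := Hg i; have := Hg j; rewrite gij => h1 h2.
  have h3 := d_tri (f i) (c (g j)) (f j); rewrite (d_sym (f i) (c (g j))) in h3.
  lra.
by have := leq_card _ inj; rewrite !card_ord.
Qed.

Lemma d_bounded : exists2 D : R, 0 < D & forall x y, d x y <= D.
Proof.
have [k [c Hc]] := finite_cover ltr01.
pose M := \big[Num.max/0]_(j < k) \big[Num.max/0]_(j' < k) d (c j) (c j').
have M0 : 0 <= M.
  rewrite /M; apply: (big_ind (fun x => 0 <= x)) => //= [u v hu hv|j _]; first by rewrite le_max hu.
  apply: (big_ind (fun x => 0 <= x)) => //= [u v hu hv|j' _]; [by rewrite le_max hu| exact: d_ge0].
exists (M + 2); first lra.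
move=> x y.
have [j hj] := Hc x; have [j' hj'] := Hc y.
have hM : d (c j) (c j') <= M.
  apply: le_trans (le_bigmax _ _ j).
  exact: (le_bigmax _ (fun j' => d (c j) (c j')) j').
have := d_tri x (c j) y; have := d_tri (c j) (c j') y.
rewrite (d_sym x (c j)); lra.
Qed.

Lemma max_family (x0 : X) {eta : R} : 0 < eta ->
  exists N (Y : 'I_N -> X), [/\ (0 < N)%N,
    (forall i j, i != j -> eta < d (Y i) (Y j)),
    sepnum d eta = (N%:R)%:E &
    forall x, exists i, d x (Y i) <= eta].
Proof.
move=> e0; have [B HB] := sep_bounded e0.
pose P := fun n => `[< sepset d eta n >].
have Pex : exists n, P n by exists 1%N; apply/asboolP; exact: sep1.
have Pub : forall n, P n -> (n <= B)%N by move=> n /asboolP; exact: HB.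
case: (ex_maxnP Pex Pub) => N /asboolP [Y HY] Nmax.
have N0 : (0 < N)%N by apply: Nmax; apply/asboolP; exact: sep1.
exists N, Y; split => //.
- apply/eqP; rewrite eq_le; apply/andP; split.
    by apply: sepnum_le => n Hn; apply: Nmax; apply/asboolP.
  by apply: sepnum_ge; exists Y.
- move=> x; apply: contrapT => /forallNP Hx.
  have Hx' : forall i, eta < d x (Y i) by move=> i; rewrite ltNge; apply/negP => /(Hx i).
  pose Y' := fun i : 'I_N.+1 => if unlift ord_max i is Some j then Y j else x.
  have : P N.+1.
    apply/asboolP; exists Y' => i j; rewrite /Y'.
    case: unliftP => [i' ->|->]; case: unliftP => [j' ->|->] //.
    + by move=> ij; apply: HY; apply: contra ij => /eqP ->.
    + by rewrite d_sym.
    + by rewrite eqxx.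
  by move=> /Nmax; rewrite ltnn.
Qed.
End Metric.
Section Prod.
Variables (R : realType) (G : countType) (X : Type) (d : X -> X -> R) (alpha : G -> R).
Hypothesis alpha_pos : forall g, 0 < alpha g.
Hypothesis d0 : forall x y, 0 <= d x y.
Variable D : R.
Hypothesis dD : forall x y, d x y <= D.
Hypothesis D0 : 0 <= D.
Hypothesis summ : (\esum_(g in [set: G]) (alpha g)%:E < +oo)%E.

Lemma seq_le_esum {s : seq G} : uniq s ->
  ((\sum_(g <- s) alpha g)%:E <= \esum_(g in [set: G]) (alpha g)%:E)%E.
Proof.
move=> us; rewrite -sumEFin fsbig_seq //; apply: ereal_sup_ubound.
by exists [set` s] => //; split => //; exact: finite_seq.
Qed.

Lemma esum_le_seq {f : G -> R} {M : R} : (forall g, 0 <= f g) ->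
  (forall s, uniq s -> \sum_(g <- s) f g <= M) ->
  (\esum_(g in [set: G]) (f g)%:E <= M%:E)%E.
Proof.
move=> f0 H; apply: ge_ereal_sup => _ [J [finJ _] <-].
rewrite fsbig_finite // sumEFin lee_fin; apply: H; exact: finmap.fset_uniq.
Qed.

Definition Asum := fine (\esum_(g in [set: G]) (alpha g)%:E).

Lemma AsumE : \esum_(g in [set: G]) (alpha g)%:E = Asum%:E.
Proof.
rewrite /Asum fineK // ge0_fin_numE //; apply: esum_ge0 => g _.
by rewrite lee_fin ltW.
Qed.

Lemma sum_le_A {s : seq G} : uniq s -> \sum_(g <- s) alpha g <= Asum.
Proof. by move=> us; rewrite -lee_fin -AsumE; exact: seq_le_esum. Qed.

Lemma tail_small (tau : R) : 0 < tau -> exists K : seq G, uniq K /\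
  forall s, uniq s -> \sum_(g <- s | g \notin K) alpha g <= tau.
Proof.
move=> t0.
have : ((Asum - tau)%:E < \esum_(g in [set: G]) (alpha g)%:E)%E.
  by rewrite AsumE lte_fin; lra.
move=> /ereal_sup_gt [_ [J [finJ _] <-]].
rewrite fsbig_finite // sumEFin lte_fin => HK.
exists ((finmap.enum_fset (fset_set J))); split; first exact: finmap.fset_uniq.
move=> s us.
pose s' := [seq g <- s | g \notin (finmap.enum_fset (fset_set J))].
have u' : uniq ((finmap.enum_fset (fset_set J)) ++ s').
  rewrite cat_uniq finmap.fset_uniq filter_uniq // andbT /=.
  apply/hasPn => g; rewrite mem_filter => /andP[h _]; exact: h.
have := sum_le_A u'; rewrite big_cat /= /s' big_filter => h.
lra.
Qed.

Lemma pm_le (x y : G -> X) (M : R) : 0 <= M ->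
  (forall s, uniq s -> \sum_(g <- s) alpha g * d (x g) (y g) <= M) ->
  prod_metric alpha d x y <= M.
Proof.
move=> M0 H; rewrite /prod_metric.
have h := esum_le_seq (fun g => mulr_ge0 (ltW (alpha_pos g)) (d0 (x g) (y g))) H.
have h0 : (0 <= \esum_(g in [set: G]) (alpha g * d (x g) (y g))%:E)%E.
  by apply: esum_ge0 => g _; rewrite lee_fin mulr_ge0 // ltW.
move: h h0; case: (\esum_(g in _) _) => [r| |] //= h h0; by rewrite -lee_fin.
Qed.

Lemma pm_ge (x y : G -> X) (g : G) : alpha g * d (x g) (y g) <= prod_metric alpha d x y.
Proof.
rewrite /prod_metric.
have h : (\esum_(g in [set: G]) (alpha g * d (x g) (y g))%:E <= (D * Asum)%:E)%E.
  apply: esum_le_seq => [g'|s us]; first by rewrite mulr_ge0 // ltW.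
  apply: le_trans (_ : \sum_(g <- s) D * alpha g <= _).
    by apply: ler_sum => g' _; rewrite mulrC ler_wpM2r // ltW.
  by rewrite -mulr_sumr ler_wpM2l // sum_le_A.
have h1 : ((alpha g * d (x g) (y g))%:E <= \esum_(g in [set: G]) (alpha g * d (x g) (y g))%:E)%E.
  apply: esum_ge; exists [set g]; first by split => //; exact: finite_set1.
  by rewrite fsbig_set1.
move: h h1; case: (\esum_(g in _) _) => [r| |] //= h h1; by rewrite -lee_fin.
Qed.

Lemma pm_tail (K : seq G) (tau theta : R) (x y : G -> X) :
  0 <= tau -> 0 <= theta ->
  (forall s, uniq s -> \sum_(g <- s | g \notin K) alpha g <= tau) ->
  (forall g, g \in K -> d (x g) (y g) <= theta) ->
  prod_metric alpha d x y <= theta * Asum + D * tau.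
Proof.
move=> t0 th0 HK Hx.
have A0 : 0 <= Asum by rewrite -lee_fin -AsumE; apply: esum_ge0 => g _; rewrite lee_fin ltW.
apply: pm_le; first by rewrite addr_ge0 // mulr_ge0.
move=> s us; rewrite (bigID (fun g => g \in K)) /=.
apply: lerD.
- apply: le_trans (_ : \sum_(g <- s | g \in K) theta * alpha g <= _).
    by apply: ler_sum => g gK; rewrite mulrC ler_wpM2r ?Hx // ltW.
  rewrite -mulr_sumr ler_wpM2l //; apply: le_trans (sum_le_A us).
  rewrite [X in _ <= X](bigID (fun g => g \in K)) /= lerDl.
  by apply: sumr_ge0 => g _; rewrite ltW.
- apply: le_trans (_ : \sum_(g <- s | g \notin K) D * alpha g <= _).
    by apply: ler_sum => g gK; rewrite mulrC ler_wpM2r // ltW.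
  by rewrite -mulr_sumr ler_wpM2l // HK.
Qed.
End Prod.
Lemma size_undup_allpairs (G : eqType) (mul : G -> G -> G) (K F : seq G) :
  (size (undup [seq mul g h | g <- K, h <- F]) <=
   size F + \sum_(g <- K) count (fun x => x \notin F) (map (mul g) F))%N.
Proof.
pose T := F ++ flatten [seq [seq x <- map (mul g) F | x \notin F] | g <- K].
have sub : {subset undup [seq mul g h | g <- K, h <- F] <= T}.
  move=> z; rewrite mem_undup => /allpairsP [[g h] [gK hF ->]] /=.
  rewrite mem_cat; case: (boolP (mul g h \in F)) => //= nF.
  apply/flattenP; exists [seq x <- map (mul g) F | x \notin F].
    by apply/mapP; exists g.
  by rewrite mem_filter nF map_f.
apply: leq_trans (uniq_leq_size (undup_uniq _) sub) _.
rewrite size_cat size_flatten /shape -map_comp sumnE big_map.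
by rewrite leq_add2l; apply: leq_sum => g _ /=; rewrite size_filter.
Qed.
Section Dyn.
Variables (R : realType) (G : countType) (mul : G -> G -> G) (one : G).
Hypothesis mul1g : left_id one mul.
Variables (X : pointedType) (d : X -> X -> R) (alpha : G -> R).
Hypothesis alpha_pos : forall g, 0 < alpha g.
Hypothesis alpha_one : alpha one = 1.
Hypothesis d0 : forall x y, 0 <= d x y.
Hypothesis dtri : forall x y z, d x z <= d x y + d y z.
Hypothesis dsym : forall x y, d x y = d y x.
Variable D : R.
Hypothesis dD : forall x y, d x y <= D.
Hypothesis D0 : 0 <= D.
Hypothesis summ : (\esum_(g in [set: G]) (alpha g)%:E < +oo)%E.

Local Notation rF F := (rhoF (gshift mul) (prod_metric alpha d) F).

Lemma rF_ge_coord (F : seq G) (p q : G -> X) h : h \in F -> d (p h) (q h) <= rF F p q.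
Proof.
move=> hF.
have := @pm_ge _ _ _ d alpha alpha_pos d0 D dD D0 summ (gshift mul h p) (gshift mul h q) one.
rewrite alpha_one mul1r /gshift !mul1g => H; apply: le_trans H _.
rewrite /rhoF; exact: (le_bigmax_seq 0 h xpredT (fun h => prod_metric alpha d (gshift mul h p) (gshift mul h q)) hF).
Qed.

Lemma lower_sep (F : seq G) (eps : R) N (Y : 'I_N -> X) : uniq F ->
  (forall i j, i != j -> eps < d (Y i) (Y j)) ->
  sepset (rF F) eps (N ^ size F)%N.
Proof.
move=> uF HY.
pose T := {ffun seq_sub F -> 'I_N}.
pose phi := fun t : T => fun g : G =>
  oapp (fun s => Y (t s)) (point : X) (insub g : option (seq_sub F)).
have -> : (N ^ size F)%N = #|T| by rewrite card_ffun card_ord card_seq_sub.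
apply: sep_fintype => t t' tt'.
have [s hs] : exists s, t s != t' s.
  apply: contrapT => /forallNP H; move/negP: tt'; apply; apply/eqP/ffunP => s.
  by apply/eqP; apply: contraT => h; case: (H s).
have h1 : phi t (val s) = Y (t s) by rewrite /phi valK.
have h2 : phi t' (val s) = Y (t' s) by rewrite /phi valK.
apply: lt_le_trans (@rF_ge_coord F (phi t) (phi t') (val s) (ssvalP s)).
by rewrite h1 h2; apply: HY.
Qed.

Lemma upper_sep (F K : seq G) (eps eta tau : R) N (Y : 'I_N -> X) :
  0 <= eps -> 0 <= eta -> 0 <= tau ->
  (forall x, exists i, d x (Y i) <= eta) ->
  (forall s, uniq s -> \sum_(g <- s | g \notin K) alpha g <= tau) ->
  (2 * eta) * Asum R G alpha + D * tau <= eps ->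
  forall n, sepset (rF F) eps n ->
   (n <= N ^ size (undup [seq mul g h | g <- K, h <- F]))%N.
Proof.
move=> e0 eta0 t0 HY HK Hb.
set S := undup [seq mul g h | g <- K, h <- F].
have [near Hnear] := boolp.choice HY.
pose T := {ffun seq_sub S -> 'I_N}.
have -> : (N ^ size S)%N = #|T| by rewrite card_ffun card_ord card_seq_sub // undup_uniq.
pose code := fun p : G -> X => [ffun s : seq_sub S => near (p (val s))] : T.
move=> n; apply: (@sep_le_fintype _ _ (rF F) T eps code) => p q cpq.
rewrite /rhoF big_seq; apply: bigmax_le => // h hF.
apply: le_trans Hb.
apply: (@pm_tail _ _ _ d alpha alpha_pos d0 D dD D0 summ K tau (2 * eta) _ _ t0 _ HK); first by rewrite mulr_ge0.
move=> g gK; rewrite /gshift.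
have hS : mul g h \in S by rewrite mem_undup; apply: allpairs_f.
pose s := SeqSub hS.
have : code p s = code q s by rewrite cpq.
rewrite !ffunE /= => hn.
have := Hnear (p (mul g h)); have := Hnear (q (mul g h)); rewrite hn => h1 h2.
have h3 := dtri (p (mul g h)) (Y (near (q (mul g h)))) (q (mul g h)).
have h4 := dsym (Y (near (q (mul g h)))) (q (mul g h)).
lra.
Qed.


Lemma limn_esup_ge (u : nat -> \bar R) (y : \bar R) :
  (forall n, (y <= u n)%E) -> (y <= limn_esup u)%E.
Proof.
move=> H; rewrite /limn_esup /limf_esup; apply: le_ereal_inf_tmp => _ [V FV <-].
have [N _ HV] := FV.
apply: le_trans (H N) _; apply: ereal_sup_ubound; 
exists N => //; apply: HV => /=; exact: leqnn.
Qed.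

Lemma limn_esup_le (u : nat -> \bar R) (z : \bar R) :
  (\forall n \near \oo, (u n <= z)%E) -> (limn_esup u <= z)%E.
Proof.
move=> H; rewrite /limn_esup /limf_esup.
apply: le_trans (ereal_inf_lbound _) _; first by exists [set n | (u n <= z)%E].
by apply: ge_ereal_sup => _ [n hn <-].
Qed.

Variable Fs : nat -> seq G.
Hypothesis HF : folner (R := R) mul Fs.

Lemma Fs_uniq n : uniq (Fs n). Proof. by case: HF => H _; case: (H n). Qed.
Lemma Fs_size n : (0 < size (Fs n))%N.
Proof. by case: HF => H _; case: (H n) => _; case: (Fs n). Qed.

Lemma fol_sum (K : seq G) (e : R) : 0 < e ->
  \forall n \near \oo,
    \sum_(g <- K) (symdiff_card mul g (Fs n))%:R / (size (Fs n))%:R <= e.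
Proof.
move=> e0.
have cv : (fun n => \sum_(g <- K) (symdiff_card mul g (Fs n))%:R / (size (Fs n))%:R : R) @ \oo --> (0:R).
  elim: K => [|g K IH].
    by under eq_fun do rewrite big_nil; exact: cvg_cst.
  under eq_fun do rewrite big_cons.
  have h1 : (fun n => (symdiff_card mul g (Fs n))%:R / (size (Fs n))%:R : R) @ \oo --> (0:R).
    by case: HF => _ /(_ g).
  have H := cvgD h1 IH; rewrite addr0 in H; exact: H.
move/cvgr_dist_lt: cv => /(_ e e0); apply: filterS => n.
rewrite sub0r normrN => h; apply: ltW; apply: le_lt_trans h; exact: ler_norm.
Qed.

Hypothesis dm : is_metric d.
Hypothesis dc : dcompact d.
Hypothesis Dpos : 0 < D.

Definition aX (eta : R) : R := ln (fine (sepnum d eta)).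
Definition cA : R := 1 / (4 * Asum R G alpha).

Lemma Asum_ge1 : 1 <= Asum R G alpha.
Proof.
have := @sum_le_A _ _ alpha alpha_pos summ [:: one] erefl.
by rewrite big_cons big_nil addr0 alpha_one.
Qed.

Lemma eqP_le (x y : R) : x = y -> x <= y. Proof. by move=> ->. Qed.

Lemma cA01 : 0 < cA < 1.
Proof. have := Asum_ge1; rewrite /cA => h; apply/andP; split.
  by apply: divr_gt0 => //; lra.
by rewrite ltr_pdivrMr; lra.
Qed.

Let u (eps : R) (n : nat) : \bar R :=
  ((((size (Fs n))%:R)^-1)%:E * elog (sepnum (rF (Fs n)) eps))%E.

Lemma mdim_bounds (eps : R) : 0 < eps < 1 -> forall e, 0 < e ->
  exists l : R, [/\ mdim_ratio (gshift mul) (prod_metric alpha d) Fs eps = (`|ln eps|^-1 * l)%:E,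
     aX eps <= l & l <= (1 + e) * aX (cA * eps)].
Proof.
move=> /andP[eps0 eps1] e e0.
have [N [Y [N0 HY sN cov]]] := @max_family R X d dm dc point _ eps0.
have [c0 c1] : 0 < cA /\ cA < 1 by case/andP: cA01.
have eta0 : 0 < cA * eps by rewrite mulr_gt0.
have [N' [Y' [N'0 HY' sN' cov']]] := @max_family R X d dm dc point _ eta0.
have tau0 : 0 < eps / (2 * D) by rewrite divr_gt0 // mulr_gt0.
have [K [uK HK]] := @tail_small _ _ alpha alpha_pos summ _ tau0.
have A1 := Asum_ge1.
have Hb : (2 * (cA * eps)) * Asum R G alpha + D * (eps / (2 * D)) <= eps.
  rewrite /cA; apply: eqP_le.
  by field; rewrite gt_eqF // gt_eqF //; lra.
have per_n : forall n, exists s : R, [/\ sepnum (rF (Fs n)) eps = s%:E,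
     (N ^ size (Fs n))%:R <= s & s <= (N' ^ size (undup [seq mul g h | g <- K, h <- Fs n]))%:R].
  move=> n; apply: sepnum_real.
  - exact: lower_sep (Fs_uniq n) HY.
  - by rewrite expn_gt0 N0.
  - exact: (@upper_sep (Fs n) K eps (cA * eps) (eps / (2 * D)) N' Y' (ltW eps0) (ltW eta0) (ltW tau0) cov' HK Hb).
have [sf Hsf] := boolp.choice per_n.
have aeps : aX eps = ln N%:R by rewrite /aX sN.
have aeta : aX (cA * eps) = ln N'%:R by rewrite /aX sN'.
have lnN0 : 0 <= ln (N'%:R : R) by apply: ln_ge0; rewrite ler1n.
have uE : forall n, u eps n = ((size (Fs n))%:R^-1 * ln (sf n))%:E.
  by move=> n; rewrite /u; case: (Hsf n) => -> _ _ /=; rewrite EFinM.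
have sf_ge : forall n, (N ^ size (Fs n))%:R <= sf n by move=> n; case: (Hsf n).
have sf_le : forall n, sf n <= (N' ^ size (undup [seq mul g h | g <- K, h <- Fs n]))%:R.
  by move=> n; case: (Hsf n).
have Npos : forall k, 0 < ((N ^ k)%:R : R) by move=> k; rewrite ltr0n expn_gt0 N0.
have sf0 : forall n, 0 < sf n by move=> n; apply: lt_le_trans (sf_ge n).
have low : forall n, ((ln (N%:R : R))%:E <= u eps n)%E.
  move=> n; rewrite uE lee_fin.
  have hk : 0 < ((size (Fs n))%:R : R) by rewrite ltr0n Fs_size.
  have h : ln ((N ^ size (Fs n))%:R : R) <= ln (sf n).
    by rewrite ler_ln ?posrE ?Npos ?sf0 // sf_ge.
  have h' : ((size (Fs n))%:R : R) * ln (N%:R : R) <= ln (sf n).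
    by rewrite mulr_natl -lnXn ?ltr0n // -natrX.
  rewrite [X in X <= _](_ : _ = ((size (Fs n))%:R)^-1 * ((size (Fs n))%:R * ln (N%:R : R))).
    by apply: ler_wpM2l => //; rewrite invr_ge0 ltW.
  by rewrite mulrA mulVf ?gt_eqF // mul1r.
have upp : \forall n \near \oo, (u eps n <= ((1 + e) * ln (N'%:R : R))%:E)%E.
  have := @fol_sum K e e0; apply: filterS => n hn.
  rewrite uE lee_fin.
  set k := size (Fs n); set m := size (undup [seq mul g h | g <- K, h <- Fs n]).
  have hk : 0 < (k%:R : R) by rewrite ltr0n Fs_size.
  have h1 : ln (sf n) <= m%:R * ln (N'%:R : R).
    apply: le_trans (_ : ln ((N' ^ m)%:R : R) <= _).
      by rewrite ler_ln ?posrE // ltr0n expn_gt0 N'0.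
    by rewrite natrX lnXn ?ltr0n // mulr_natl.
  have h2 : (m <= k + \sum_(g <- K) symdiff_card mul g (Fs n))%N.
    apply: (leq_trans (@size_undup_allpairs _ mul K (Fs n))); rewrite leq_add2l.
    by apply: leq_sum => g _; rewrite /symdiff_card leq_addr.
  have h2' : (m%:R : R) <= k%:R + \sum_(g <- K) (symdiff_card mul g (Fs n))%:R.
    by rewrite -natr_sum -natrD ler_nat.
  rewrite -mulr_suml ler_pdivrMr // in hn.
  rewrite -(ler_pM2l hk) mulrA mulfV ?gt_eqF // mul1r.
  nra.
set L := limn_esup (u eps).
have lowL : ((ln (N%:R : R))%:E <= L)%E by apply: limn_esup_ge.
have uppL : (L <= ((1 + e) * ln (N'%:R : R))%:E)%E by apply: limn_esup_le.
have -> : mdim_ratio (gshift mul) (prod_metric alpha d) Fs eps = ((`|ln eps|^-1)%:E * L)%E by [].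
move: lowL uppL; case: L => [l| |] //= lowL uppL.
- exists l; rewrite -EFinM aeps aeta; split => //; by rewrite -lee_fin.
Qed.

Lemma aX_ge0 (x : R) : 0 < x -> 0 <= aX x.
Proof.
move=> x0; have [N [Y [N0 _ sN _]]] := @max_family R X d dm dc point _ x0.
by rewrite /aX sN /=; apply: ln_ge0; rewrite ler1n.
Qed.

Lemma box_ratioE (x : R) : 0 < x -> box_ratio d x = (`|ln x|^-1 * aX x)%:E.
Proof.
move=> x0; have [N [Y [N0 _ sN _]]] := @max_family R X d dm dc point _ x0.
by rewrite /box_ratio /aX sN /= EFinM.
Qed.

Lemma final :
  upper_mdimM (gshift mul) (prod_metric alpha d) Fs = upper_box_dim d /\
  lower_mdimM (gshift mul) (prod_metric alpha d) Fs = lower_box_dim d.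
Proof.
have bm : forall x, 0 < x < 1 ->
    (box_ratio d x <= mdim_ratio (gshift mul) (prod_metric alpha d) Fs x)%E.
  move=> x x01; have [l [-> h1 h2]] := @mdim_bounds x x01 1 ltr01.
  have x0 : 0 < x by case/andP: x01.
  rewrite box_ratioE // lee_fin; by apply: ler_wpM2l.
have mb : forall e, 0 < e -> forall x, 0 < x < 1 ->
    (mdim_ratio (gshift mul) (prod_metric alpha d) Fs x <=
      ((1 + e) * (`|ln x|^-1 * aX (cA * x)))%:E)%E.
  move=> e e0 x x01; have [l [-> h1 h2]] := @mdim_bounds x x01 e e0.
  rewrite lee_fin mulrCA; by apply: ler_wpM2l.
rewrite /upper_mdimM /lower_mdimM /upper_box_dim /lower_box_dim; split; apply/le_anti/andP; split.
- exact: (@key_sup_le R _ _ aX cA cA01 aX_ge0 box_ratioE mb).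
- exact: (@key_sup_ge R _ _ bm).
- exact: (@key_inf_le R _ _ aX cA cA01 aX_ge0 box_ratioE mb).
- exact: (@key_inf_ge R _ _ bm).
Qed.
End Dyn.

Theorem mainTheorem6 (R : realType)
  (G : countType) (mul : G -> G -> G) (one : G) (inv : G -> G)
  (mulA : associative mul) (mul1g : left_id one mul)
  (mulVg : left_inverse one inv mul)
  (G_amenable : amenable (R := R) mul)
  (X : pointedType) (d : X -> X -> R)
  (d_metric : is_metric d) (X_compact : dcompact d)
  (alpha : G -> R) (alpha_pos : forall g, 0 < alpha g) (alpha_one : alpha one = 1)
  (alpha_summable : (\esum_(g in [set: G]) (alpha g)%:E < +oo)%E)
  (HC : condition_C (Z := G -> X) (gshift mul) (prod_metric alpha d)) :
  forall F : nat -> seq G, folner (R := R) mul F ->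
    upper_mdimM (gshift mul) (prod_metric alpha d) F = upper_box_dim d /\
    lower_mdimM (gshift mul) (prod_metric alpha d) F = lower_box_dim d.
Proof.
move=> F HF.
have [D D0 dD] := @d_bounded R X d d_metric X_compact.
exact: (@final R G mul one mul1g X d alpha alpha_pos alpha_one
  (@d_ge0 R X d d_metric) (@d_tri R X d d_metric) (@d_sym R X d d_metric) D dD (ltW D0)
  alpha_summable F HF d_metric X_compact D0).
Qed.
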